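(* Let $D$ be a nonempty domain, let $\mathcal I_1$ be a set of unary predicates on $D$ and $\mathcal I_2$ a set of binary predicates on $D$. Let $\bar L\ge 0$ and $\bar H\ge 1$ be integers. Then every predicate in $\mathcal{FOET}_{\{\bar L,\bar H\}}(\mathcal I_1,\mathcal I_2)$ is computed by some join-chain computation with $\bar L$ layers and at most $\bar H$ heads per layer, with input $\mathcal I_1$ and binary predicates from $\mathcal I_2$.
   Context: All predicates are interpreted on $D$; an empty conjunction is the constant-true predicate. $\mathcal{FOET}(\mathcal I_1,\mathcal I_2)$: the set of unary predicates $P(y_0)$ (free variable $y_0$) that are logically equivalent to a formula $$P(y_0)=\exists y_1\cdots\exists y_T\ \bigvee_{m=1}^{M}\Big[\Big(\bigwedge_{t\in\mathcal N^m}P^m_t(y_t)\Big)\wedge\Big(\bigwedge_{(t_p,t_c)\in\mathcal E^m}W^m_{(t_p,t_c)}(y_{t_p},y_{t_c})\Big)\wedge Q^m\Big]$$ in which: each $\mathcal N^m\subseteq\{0,\dots,T\}$ contains $0$; each $\mathcal E^m$ is a set of pairs $(t_p,t_c)$ of elements of $\mathcal N^m$ such that the graph $\mathcal G^m=(\mathcal N^m,\mathcal E^m)$ is a tree, regarded as rooted at $0$ with $t_p$ the parent of $t_c$ for each edge; each $W^m_{(t_p,t_c)}\in\mathcal I_2$; each $P^m_t$ is a finite conjunction of predicates from $\mathcal I_1$; and each $Q^m$ is a propositional constant (true or false). Height and width: for the tree $\mathcal G^m$ let $L^m$ be its height (the maximum number of edges on a path from the root $0$ to a vertex) and $H^m$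 its number of leaf nodes. The height of the predicate is $L=\max_m L^m$ and its width is $H=\sum_m H^m$. $\mathcal{FOET}_{\{\bar L,\bar H\}}(\mathcal I_1,\mathcal I_2)$ is the set of predicates in $\mathcal{FOET}(\mathcal I_1,\mathcal I_2)$ admitting such a representation with $L\le\bar L$ and $H\le\bar H$. Join operation: for a binary predicate $W$ and unary predicate $R$, the join is the unary predicate $x\mapsto\exists y\in D\,(W(x,y)\wedge R(y))$. Join-chain computation with $\bar L$ layers and at most $\bar H$ heads per layer (symbolic model of the network consisting of stacked multi-head self-attention blocks, each head's attention matrix representing a binary predicate and its value tensor a unary predicate, with a skip connection and an aggregation/feed-forward step after each block): let $\mathcal C_0$ be the set of all finite conjunctions of predicates in $\mathcal I_1$. For $l=1,\dots,\bar L$, layer $l$ consists of at most $\bar H$ heads; head $k$ selects some $W\in\mathcal I_2$ and some $R\in\mathcal C_{l-1}$ and outputs the join $J_{l,k}(x)=\exists y\,(W(x,y)\wedge R(y))$; then (skip connection plus aggregation) $\mathcal C_l$ is the set of all finite conjunctions of predicates from $\mathcal C_{l-1}\cup\{J_{l,k}\}_k$. The output of the computation is a predicate of the form $x\mapsto\bigvee_{m=1}^{M}(R_m(x)\wedge q_m)$ with $R_m\in\mathcal C_{\bar L}$ and $q_m$ propositional constants. A unary predicate is computed by such a computation if it equals (on $D$) the output for some choice of heads and final disjunction. (Standing assumption of the paper: every $W\in\mathcal I_2$ is a function of some subset of the inputs $\mathcal I_1$, so that the heads may realize any $W\in\mathcal I_2$; this is built into the model above by allowing heads to select any $W\in\mathcal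 I_2$.) *)

(* Defs.v *)
From mathcomp Require Import all_boot.
From Stdlib Require List.
Set Implicit Arguments. Unset Strict Implicit. Unset Printing Implicit Defensive.

Section Defs.
Variable D : Type.

Definition conjs (l : seq (D -> Prop)) : D -> Prop :=
  fun x => forall p, List.In p l -> p x.

Definition conj_closure (S : (D -> Prop) -> Prop) : (D -> Prop) -> Prop :=
  fun R => exists l : seq (D -> Prop),
      (forall p, List.In p l -> S p) /\ (forall x, R x <-> conjs l x).

Definition join (W : D -> D -> Prop) (R : D -> Prop) : D -> Prop :=
  fun x => exists y, W x y /\ R y.

Definition rooted_tree (T : nat) (N : {set 'I_T.+1}) (E : {set 'I_T.+1 * 'I_T.+1}) : Prop :=
  [/\ ord0 \in N,
      (forall e, e \in E -> (e.1 \in N) && (e.2 \in N)),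
      (forall tp, (tp, ord0) \notin E),
      (forall t, t \in N -> t != ord0 ->
         exists tp, (tp, t) \in E /\ forall tp', (tp', t) \in E -> tp' = tp) &
      (forall t, t \in N -> connect (fun a b => (a, b) \in E) ord0 t)].

Definition tree_height_le (T : nat) (E : {set 'I_T.+1 * 'I_T.+1}) (L : nat) : Prop :=
  forall s : seq 'I_T.+1, path (fun a b => (a, b) \in E) ord0 s -> size s <= L.

Definition nleaves (T : nat) (N : {set 'I_T.+1}) (E : {set 'I_T.+1 * 'I_T.+1}) : nat :=
  #|[set t in N | [forall c : 'I_T.+1, (t, c) \notin E]]|.

(* The matrix of the FOET formula with T+1 variables y_0..y_T and M disjuncts. *)
Definition foet_formula (T M : nat)
    (N : 'I_M -> {set 'I_T.+1}) (E : 'I_M -> {set 'I_T.+1 * 'I_T.+1})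
    (P : 'I_M -> 'I_T.+1 -> seq (D -> Prop))
    (W : 'I_M -> 'I_T.+1 -> 'I_T.+1 -> (D -> D -> Prop))
    (Q : 'I_M -> bool) : D -> Prop :=
  fun y0 => exists y : 'I_T.+1 -> D, y ord0 = y0 /\
    exists m : 'I_M,
      (forall t, t \in N m -> conjs (P m t) (y t)) /\
      (forall tp tc, (tp, tc) \in E m -> W m tp tc (y tp) (y tc)) /\
      Q m.

Definition in_FOET (I1 : (D -> Prop) -> Prop) (I2 : (D -> D -> Prop) -> Prop)
    (Lb Hb : nat) (Pr : D -> Prop) : Prop :=
  exists (T M : nat)
    (N : 'I_M -> {set 'I_T.+1}) (E : 'I_M -> {set 'I_T.+1 * 'I_T.+1})
    (P : 'I_M -> 'I_T.+1 -> seq (D -> Prop))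
    (W : 'I_M -> 'I_T.+1 -> 'I_T.+1 -> (D -> D -> Prop))
    (Q : 'I_M -> bool),
    (forall m, rooted_tree (N m) (E m)) /\
    (forall m tp tc, (tp, tc) \in E m -> I2 (W m tp tc)) /\
    (forall m t p, List.In p (P m t) -> I1 p) /\
    (forall m, tree_height_le (E m) Lb) /\
    (\sum_(m < M) nleaves (N m) (E m) <= Hb)%N /\
    (forall x, Pr x <-> foet_formula N E P W Q x).

Definition layer_step (C : (D -> Prop) -> Prop)
    (heads : seq ((D -> D -> Prop) * (D -> Prop))) : (D -> Prop) -> Prop :=
  conj_closure (fun p => C p \/ exists h, List.In h heads /\ p = join h.1 h.2).

Inductive chain (I1 : (D -> Prop) -> Prop) (I2 : (D -> D -> Prop) -> Prop) (Hb : nat)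
  : nat -> ((D -> Prop) -> Prop) -> Prop :=
| chain0 : chain I1 I2 Hb 0 (conj_closure I1)
| chainS l C heads :
    chain I1 I2 Hb l C ->
    (size heads <= Hb)%N ->
    (forall h, List.In h heads -> I2 h.1 /\ C h.2) ->
    chain I1 I2 Hb l.+1 (layer_step C heads).

Definition computed_by_chain (I1 : (D -> Prop) -> Prop) (I2 : (D -> D -> Prop) -> Prop)
    (Lb Hb : nat) (Pr : D -> Prop) : Prop :=
  exists C, chain I1 I2 Hb Lb C /\
    exists outs : seq ((D -> Prop) * bool),
      (forall o, List.In o outs -> C o.1) /\
      (forall x, Pr x <-> exists o, List.In o outs /\ o.1 x /\ o.2).

End Defs.

(* Main.v *)
Require Import Defs.
From mathcomp Require Import all_boot.
From Stdlib Require Import IndefiniteDescription.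
Set Implicit Arguments. Unset Strict Implicit. Unset Printing Implicit Defensive.

Section Graph.
Variable T : nat.
Variable E : {set 'I_T.+1 * 'I_T.+1}.
Hypothesis upar : forall p p' c, (p,c) \in E -> (p',c) \in E -> p = p'.
Definition er : rel 'I_T.+1 := fun a b => (a,b) \in E.
Definition hle (v : 'I_T.+1) (k : nat) := forall s, path er v s -> (size s <= k)%N.

Lemma hle_child v c k : hle v k.+1 -> (v,c) \in E -> hle c k.
Proof. move=> h vc s ps; have := h (c :: s); rewrite /= ps andbT; by apply. Qed.

Lemma hle0_nochild v c : hle v 0 -> (v,c) \in E -> False.
Proof. move=> h vc; have := h [:: c]; by rewrite /= andbT; move/(_ vc). Qed.

Lemma cyc_long v s : path er v s -> last v s = v -> s != [::] ->
  forall n, exists s', path er v s' /\ (n <= size s')%N.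
Proof.
move=> ps ls sn; elim=> [|n [s' [ps' hs']]]; first by exists [::].
exists (s ++ s'); rewrite cat_path ps ls ps' size_cat; split=> //.
have hs : (0 < size s)%N by case: (s) sn.
by rewrite -addn1 addnC leq_add.
Qed.

Lemma acyc v k c : hle v k -> (v,c) \in E -> ~ connect er c v.
Proof.
move=> h vc /connectP [s ps ls].
have p1 : path er v (c :: s) by rewrite /= ps andbT.
have l1 : last v (c :: s) = v by rewrite /= -ls.
have [s' [ps' hs']] := @cyc_long v (c :: s) p1 l1 isT k.+1.
by have := h _ ps'; rewrite leqNgt hs'.
Qed.

Lemma comp a u b : connect er a u -> connect er b u -> connect er a b \/ connect er b a.
Proof.
move=> /connectP [s]; elim/last_ind: s u => [|s x IH] u /= pa ->; first by right.
move: pa; rewrite rcons_path => /andP [pa ex]; rewrite last_rcons.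
move=> /connectP [t]; case/lastP: t => [|t x'] pb hx.
  left; apply/connectP; exists (rcons s x); first by rewrite rcons_path pa ex.
  by rewrite last_rcons hx.
move: pb; rewrite rcons_path => /andP [pb ex']; rewrite last_rcons in hx; subst x'.
have e1 := upar ex ex'.
apply: (IH (last a s)) => //; apply/connectP; exists t => //.
Qed.

Lemma back a b p : connect er a b -> a != b -> (p,b) \in E -> connect er a p.
Proof.
move=> /connectP [t]; case/lastP: t => [|t x] pt hb; first by rewrite hb eqxx.
move: pt; rewrite rcons_path last_rcons in hb * => /andP [pt ex] _ pb; subst x.
rewrite (upar pb ex); apply/connectP; by exists t.
Qed.

Lemma disj v k c c' u : hle v k -> (v,c) \in E -> (v,c') \in E ->
  connect er c u -> connect er c' u -> c = c'.
Proof.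
move=> h vc vc' cu c'u.
case: (comp cu c'u) => hh.
  case: (eqVneq c c') => // ne; exfalso; exact: (acyc h vc (back hh ne vc')).
case: (eqVneq c' c) => // ne; exfalso; exact: (acyc h vc' (back hh ne vc)).
Qed.

Lemma sub v u : connect er v u -> u != v -> exists c, (v,c) \in E /\ connect er c u.
Proof.
move=> /connectP [[|c s] /= ps hu]; first by rewrite hu eqxx.
move: ps => /andP [vc ps] _; exists c; split=> //; apply/connectP; by exists s.
Qed.

Lemma nochild_conn v u : (forall c, (v,c) \notin E) -> connect er v u -> u = v.
Proof.
move=> h /connectP [[|c s] /= ps hu] //.
by move: ps => /andP [vc _]; move: (h c); rewrite -/(er v c) vc.
Qed.


Variable D : Type.
Variable P : 'I_T.+1 -> seq (D -> Prop).
Variable W : 'I_T.+1 -> 'I_T.+1 -> D -> D -> Prop.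

Fixpoint phi (k : nat) : 'I_T.+1 -> D -> Prop := fun v x =>
  conjs (P v) x /\ match k with 0 => True | k'.+1 =>
    forall c, (v,c) \in E -> exists z, W v c x z /\ phi k' c z end.

Definition good (v : 'I_T.+1) (y : 'I_T.+1 -> D) :=
  (forall u, connect er v u -> conjs (P u) (y u)) /\
  (forall p q, connect er v p -> (p,q) \in E -> W p q (y p) (y q)).

Lemma sem_l k v y : good v y -> phi k v (y v).
Proof.
elim: k v => [|k IH] v [hP hW]; first by split=> //; apply: hP.
split; first exact: hP.
move=> c vc; exists (y c); split; first exact: hW.
apply: IH; split.
  move=> u cu; apply: hP; apply: connect_trans (connect1 _) cu; exact: vc.
move=> p q cp pq; apply: hW => //; apply: connect_trans (connect1 _) cp; exact: vc.
Qed.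

Lemma sem_r k v x : hle v k -> phi k v x -> exists y, y v = x /\ good v y.
Proof.
elim: k v x => [|k IH] v x h [hP hC].
  exists (fun _ => x); split=> //; split.
    move=> u /(nochild_conn (fun c => introN idP (fun vc => hle0_nochild h vc))) ->.
    done.
  move=> p q /(nochild_conn (fun c => introN idP (fun vc => hle0_nochild h vc))) -> vq.
  by case: (hle0_nochild h vq).
have ch : forall c, exists yc : 'I_T.+1 -> D, (v,c) \in E ->
    W v c x (yc c) /\ good c yc.
  move=> c; case: (boolP ((v,c) \in E)) => vc; last by exists (fun _ => x).
  have [z [Wz pz]] := hC c vc.
  have [yc [yc0 gc]] := IH c z (hle_child h vc) pz.
  by exists yc => _; rewrite yc0.
have [Y HY] := functional_choice _ ch.
pose y u := if u == v then x else
  if [pick c | ((v,c) \in E) && connect er c u] is Some c then Y c u else x.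
have yv : y v = x by rewrite /y eqxx.
have ysub : forall c u, (v,c) \in E -> connect er c u -> y u = Y c u.
  move=> c u vc cu; rewrite /y; case: eqP => [uv|_].
    by subst u; case: (acyc h vc cu).
  case: pickP => [c' /andP [vc' c'u]|/(_ c)]; last by rewrite vc cu.
  by rewrite (disj h vc' vc c'u cu).
exists y; split=> //; split.
  move=> u vu; case: (eqVneq u v) => [->|ne]; first by rewrite yv.
  have [c [vc cu]] := sub vu ne.
  rewrite (ysub c u vc cu); have [_ [gP _]] := HY c vc; exact: gP.
move=> p q vp pq; case: (eqVneq p v) => [pv|ne].
  subst p; rewrite yv (ysub q q pq (connect0 _ _)).
  by have [Wq _] := HY q pq.
have [c [vc cp]] := sub vp ne.
have cq : connect er c q by apply: connect_trans cp (connect1 _); exact: pq.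
rewrite (ysub c p vc cp) (ysub c q vc cq).
have [_ [_ gW]] := HY c vc; exact: gW.
Qed.


Definition leafb (u : 'I_T.+1) := [forall c, (u,c) \notin E].
Definition lc (v : 'I_T.+1) := #|[pred w | connect er v w && leafb w]|.

Lemma lc_mono v c : connect er v c -> (lc c <= lc v)%N.
Proof.
move=> vc; apply: subset_leq_card; apply/subsetP => w /=; rewrite !inE.
by case/andP => cw ->; rewrite (connect_trans vc cw).
Qed.

Lemma lc_pos k v : hle v k -> (0 < lc v)%N.
Proof.
elim: k v => [|k IH] v h.
  apply/card_gt0P; exists v; rewrite inE connect0 /=; apply/forallP => c.
  by apply/negP => vc; case: (hle0_nochild h vc).
case: (boolP [exists c, (v,c) \in E]) => [/existsP [c vc]|].
  apply: leq_trans (IH c (hle_child h vc)) (lc_mono (connect1 _)); exact: vc.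
move=> /existsPn hn; apply/card_gt0P; exists v; rewrite inE connect0 /=.
exact/forallP.
Qed.

Lemma lc_count k v : hle v k -> (\sum_(c | (v,c) \in E) lc c <= lc v)%N.
Proof.
move=> h.
rewrite /lc.
under eq_bigr => c _ do rewrite -sum1_card big_mkcond /=.
rewrite exchange_big /= -sum1_card [X in (_ <= X)%N]big_mkcond /=.
apply: leq_sum => w _.
case: (boolP [exists c, ((v,c) \in E) && connect er c w]) => [/existsP [c0 /andP [vc0 c0w]]|hn].
  rewrite (bigD1 c0) //= big1 ?addn0.
    rewrite !inE c0w (connect_trans (connect1 vc0) c0w); by case: leafb.
  move=> c /andP [vc ne]; rewrite inE; case: (boolP (connect er c w)) => //= cw.
  by rewrite (disj h vc vc0 cw c0w) eqxx in ne.
rewrite big1 // => c vc; rewrite inE; case: (boolP (connect er c w)) => //= cw.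
by move/existsPn: hn => /(_ c); rewrite vc cw.
Qed.

End Graph.

Lemma In_cat (A : Type) (x : A) s1 s2 : List.In x (s1 ++ s2) <-> List.In x s1 \/ List.In x s2.
Proof. elim: s1 => [|a s IH] /=; first by tauto. rewrite IH; tauto. Qed.

Lemma In_map (A B : Type) (f : A -> B) y s : List.In y (map f s) <-> exists x, List.In x s /\ y = f x.
Proof.
elim: s => [|a s IH] /=; first by split=> // [[x []]].
split.
  case=> [<-|]; first by exists a; split; [left|].
  by move/IH => [x [hx ->]]; exists x; split; [right|].
case=> x [[<-|hx] hy]; subst y; first by left.
by right; apply/IH; exists x.
Qed.

Lemma In_flatten (A : Type) (x : A) ss : List.In x (flatten ss) <-> exists s, List.In s ss /\ List.In x s.
Proof.
elim: ss => [|s ss IH] /=; first by split=> // [[s []]].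
rewrite In_cat IH; split.
  case=> [h|]; first by exists s; split; [left|].
  by case=> s' [h1 h2]; exists s'; split; [right|].
case=> s' [[<-|h1] h2]; [by left| by right; exists s'].
Qed.

Lemma In_mem (A : eqType) (x : A) s : List.In x s <-> x \in s.
Proof.
elim: s => [|a s IH] //=; rewrite in_cons IH; split.
  by case=> [->|->]; rewrite ?eqxx ?orbT.
by case/orP=> [/eqP ->|]; [left| right].
Qed.

Lemma size_flatten_map (A B : Type) (g : A -> seq B) L :
  size (flatten [seq g x | x <- L]) = (\sum_(x <- L) size (g x))%N.
Proof. elim: L => [|a L IH]; first by rewrite big_nil. by rewrite big_cons /= size_cat IH. Qed.

Section Main.
Variables (D : Type) (I1 : (D -> Prop) -> Prop) (I2 : (D -> D -> Prop) -> Prop) (Hb : nat).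
Variables (T M : nat) (E : 'I_M -> {set 'I_T.+1 * 'I_T.+1}).
Variable P : 'I_M -> 'I_T.+1 -> seq (D -> Prop).
Variable W : 'I_M -> 'I_T.+1 -> 'I_T.+1 -> (D -> D -> Prop).
Hypothesis upar : forall m p p' c, (p,c) \in E m -> (p',c) \in E m -> p = p'.
Hypothesis HW : forall m tp tc, (tp, tc) \in E m -> I2 (W m tp tc).
Hypothesis HP : forall m t p, List.In p (P m t) -> I1 p.

Definition ph m k v := phi (E m) (P m) (W m) k v.
Definition kids m v := enum [pred c | (v,c) \in E m].

Lemma In_kids m v c : List.In c (kids m v) <-> (v,c) \in E m.
Proof. by rewrite In_mem mem_enum inE. Qed.

Lemma chain_I1 k C p : chain I1 I2 Hb k C -> I1 p -> C p.
Proof.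
elim=> [|l C' heads _ IH _ _] hp.
  by exists [:: p]; split=> [q [<-|[]]|x] //; split=> [h q [<-|[]]|h]; [|apply: h; left].
exists [:: p]; split=> [q [<-|[]]|x]; first by left; apply: IH.
by split=> [h q [<-|[]]|h]; [|apply: h; left].
Qed.

Lemma main_chain k : forall L : seq ('I_M * 'I_T.+1),
  (forall mv, List.In mv L -> hle (E mv.1) mv.2 k) ->
  (\sum_(mv <- L) lc (E mv.1) mv.2 <= Hb)%N ->
  exists C, chain I1 I2 Hb k C /\ forall mv, List.In mv L -> C (ph mv.1 k mv.2).
Proof.
elim: k => [|k IH] L hL hs.
  exists (conj_closure I1); split; first exact: chain0.
  move=> [m v] _; exists (P m v); split; first exact: HP.
  by move=> x; rewrite /ph /=; split=> [[]|].
pose L' := flatten [seq [seq (mv.1, c) | c <- kids mv.1 mv.2] | mv <- L].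
have hcount : forall mv, mv \in L ->
    (\sum_(c <- kids mv.1 mv.2) lc (E mv.1) c <= lc (E mv.1) mv.2)%N.
  move=> [m v] /In_mem /hL /= h; rewrite /kids big_enum /=.
  exact: (lc_count (upar (m:=m)) h).
have [C [hC hCL]] : exists C, chain I1 I2 Hb k C /\ forall mv, List.In mv L' -> C (ph mv.1 k mv.2).
  apply: IH.
    move=> [m c] /In_flatten [s [/In_map [[m' v] [hv ->]] /In_map [c' [hc [-> ->]]]]] /=.
    exact: (hle_child (hL _ hv) (proj1 (In_kids _ _ _) hc)).
  apply: leq_trans hs; rewrite /L' big_flatten /= big_map big_seq [X in (_ <= X)%N]big_seq.
  apply: leq_sum => mv hmv; rewrite big_map; exact: hcount.
pose heads := flatten [seq [seq (W mv.1 mv.2 c, ph mv.1 k c) | c <- kids mv.1 mv.2] | mv <- L].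
exists (layer_step C heads); split.
  apply: chainS => //.
    rewrite size_flatten_map; apply: leq_trans hs; rewrite big_seq [X in (_ <= X)%N]big_seq.
    apply: leq_sum => [[m v]] hmv; rewrite size_map; apply: leq_trans (hcount _ hmv).
    have hv := hL _ (proj2 (In_mem _ _) hmv).
    rewrite /= /kids -cardE -sum1_card big_enum /=; apply: leq_sum => c vc.
    exact: (lc_pos (hle_child hv vc)).
  move=> h /In_flatten [s [/In_map [[m v] [hv ->]] /In_map [c [hc ->]]]] /=.
  split; first by apply: HW; apply/In_kids.
  apply: (hCL (m, c)); apply/In_flatten; eexists; split; first by apply/In_map; exists (m, v).
  by apply/In_map; exists c.
move=> [m v] hv /=.
exists (P m v ++ [seq join (W m v c) (ph m k c) | c <- kids m v]); split.
  move=> p /In_cat [hp|/In_map [c [hc ->]]].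
    by left; apply: chain_I1 hC (HP hp).
  right; exists (W m v c, ph m k c); split=> //.
  apply/In_flatten; eexists; split; first by apply/In_map; exists (m, v).
  by apply/In_map; exists c.
move=> x; rewrite /ph /=; split.
  move=> [hP hc] p /In_cat [hp|/In_map [c [hc' ->]]]; first exact: hP.
  exact: (hc c (proj1 (In_kids _ _ _) hc')).
move=> h; split; first by move=> p hp; apply: h; apply/In_cat; left.
move=> c vc; apply: (h (join (W m v c) (ph m k c))); apply/In_cat; right.
by apply/In_map; exists c; split=> //; apply/In_kids.
Qed.

End Main.

Lemma upar_of T (N : {set 'I_T.+1}) E : rooted_tree N E ->
  forall p p' c, (p,c) \in E -> (p',c) \in E -> p = p'.
Proof.
move=> [h0 hL1 hL2 h3 h4] p p' c pc p'c.
have cN : c \in N by case/andP: (hL1 _ pc).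
have c0 : c != ord0 by apply/eqP => e; subst c; move: (hL2 p); rewrite pc.
have [tp [_ U]] := h3 c cN c0; by rewrite (U _ pc) (U _ p'c).
Qed.

Lemma conn_N T (N : {set 'I_T.+1}) E w : rooted_tree N E -> connect (er E) ord0 w -> w \in N.
Proof.
move=> [h0 hL1 _ _ _] /connectP [s]; case/lastP: s => [|s x] ps ->; first by [].
rewrite last_rcons; move: ps; rewrite rcons_path => /andP [_ ex].
by case/andP: (hL1 _ ex).
Qed.

Theorem theorem2 (D : Type) (hD : inhabited D)
    (I1 : (D -> Prop) -> Prop) (I2 : (D -> D -> Prop) -> Prop)
    (Lb Hb : nat) (hHb : (1 <= Hb)%N) (Pr : D -> Prop) :
  in_FOET I1 I2 Lb Hb Pr -> computed_by_chain I1 I2 Lb Hb Pr.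
Proof.
move=> [T [M [N [E [P [W [Q [Ht [HW [HP [Hh [Hs Heq]]]]]]]]]]]].
have up : forall m p p' c, (p,c) \in E m -> (p',c) \in E m -> p = p'.
  by move=> m; apply: upar_of (Ht m).
pose L := [seq (m, (ord0 : 'I_T.+1)) | m <- index_enum 'I_M].
have hL1 : forall mv, List.In mv L -> hle (E mv.1) mv.2 Lb.
  move=> mv /In_map [m [_ ->]]; exact: Hh.
have hL2 : (\sum_(mv <- L) lc (E mv.1) mv.2 <= Hb)%N.
  rewrite big_map; apply: leq_trans Hs; apply: leq_sum => m _.
  apply: subset_leq_card; apply/subsetP => w; rewrite !inE => /andP [cw lw].
  rewrite (conn_N (Ht m) cw); exact: lw.
have [C [hC hCL]] := @main_chain D I1 I2 Hb T M E P W up HW HP Lb L hL1 hL2.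
exists C; split=> //.
exists [seq (ph E P W m Lb ord0, Q m) | m <- index_enum 'I_M]; split.
  move=> o /In_map [m [hm ->]] /=; apply: (hCL (m, ord0)).
  by apply/In_map; exists m.
move=> x; rewrite Heq; split.
  move=> [y [y0 [m [hP [hW hQ]]]]].
  exists (ph E P W m Lb ord0, Q m); split.
    by apply/In_map; exists m; split=> //; apply/In_mem; rewrite mem_index_enum.
  split=> //=; rewrite -y0; apply: sem_l; split.
    by move=> u /(conn_N (Ht m)); apply: hP.
  by move=> p q _; apply: hW.
move=> [o [/In_map [m [_ ->]] /= [hx hQ]]].
have [y [y0 [gP gW]]] := sem_r (up m) (Hh m) hx.
exists y; split=> //; exists m; split; last split=> //.
  by move=> t tN; apply: gP; case: (Ht m) => _ _ _ _ h5; apply: h5.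
move=> tp tc e; apply: gW => //; case: (Ht m) => _ h2 _ _ h5; apply: h5.
by case/andP: (h2 _ e).
Qed.
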